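(* Let $\bm{\mu}\in X^{\mathcal{L}(\mathcal{T})}$ with $V_{s_0}(\bm{\mu})\neq\theta$, let $\ell\in\mathcal{L}(\mathcal{T})$, and let $s_0,s_1,\dots,s_k=\ell$ be the path from the root to $\ell$. Then $w^{s_0}_\ell(\bm{\mu})>0$ if and only if both: $d_{s_i}(\bm{\mu})>0$ for all $i=0,1,\dots,k$; and $s_{i+1}=c^*(s_i)$ for every $i\in\{0,\dots,k-1\}$ with $L(s_i)=$MAX in case $a_{s_0}(\bm{\mu})=$'win' (respectively with $L(s_i)=$MIN in case $a_{s_0}(\bm{\mu})=$'lose').
   Context: $\mathcal{T}$ is a finite rooted tree with node set $S$, root $s_0$, children $\mathcal{C}(s)$, leaves $\mathcal{L}(\mathcal{T})$, $\mathcal{D}(s)$ the leaves descending from $s$; internal labels $L(s)\in\{\text{MAX},\text{MIN}\}$. $X\subseteq\mathbb{R}$ mean-parameter set of a one-parameter exponential family; $d(x,y)$ KL divergence between members with means $x,y$; threshold $\theta\in X$. $V_s(\bm{\mu})=\mu_s$ at leaves, max/min of children's values at MAX/MIN nodes; $a_s(\bm{\mu})=$'win' iff $V_s(\bm{\mu})\ge\theta$. Recursive weights: $a^*=a_{s_0}(\bm{\mu})$; $P=$MAX, $Q=$MIN if $a^*=$'win', swapped if 'lose'. Leaf $s$: $w^s_s=1$, $d_s=d(\mu_s,\theta)$ if ($a^*=$'win', $\mu_s\ge\theta$) or ($a^*=$'lose', $\mu_s<\theta$), else $0$. $L(s)=P$: $d_s=\max_c d_c$, with a fixed choice $c^*(s)\in\arg\max_{c\in\mathcal{C}(s)}d_c$;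 if $d_s>0$: $w^s_\ell=w^{c^*(s)}_\ell$ for $\ell\in\mathcal{D}(c^*(s))$, $0$ for other $\ell\in\mathcal{D}(s)$. $L(s)=Q$, all $d_c>0$: $d_s=(\sum_c1/d_c)^{-1}$, $w^s_\ell=\frac{w^c_\ell/d_c}{\sum_{c'}1/d_{c'}}$ for $\ell\in\mathcal{D}(c)$. $L(s)=Q$ otherwise: $d_s=0$. Internal $s$ with $d_s=0$: $\bm{w}^s$ fixed arbitrary probability vector on $\mathcal{D}(s)$. *)

(* Defs.v *)
From HB Require Import structures.
From mathcomp Require Import all_boot all_order all_algebra.
From mathcomp Require Import all_classical all_reals all_analysis.

Set Implicit Arguments.
Unset Strict Implicit.
Unset Printing Implicit Defensive.

Import Order.TTheory GRing.Theory Num.Theory.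
Import numFieldNormedType.Exports.
Local Open Scope ring_scope.
Local Open Scope classical_set_scope.

(* One-parameter exponential family (natural parametrisation).          *)
(* Densities exp(eta * x - b eta) w.r.t. a base measure; b is the       *)
(* log-partition function on the open natural-parameter interval Theta, *)
(* differentiable with strictly increasing derivative (non-degenerate   *)
(* family).  The mean of the member with natural parameter eta is       *)
(* b'(eta); the mean-parameter set is X = b' @` Theta.                  *)
Record expfam (R : realType) := ExpFam {
  ef_Theta : set R;
  ef_b : R -> R;
  ef_Theta_open : open ef_Theta;
  ef_Theta_itv : is_interval ef_Theta;
  ef_Theta_n0 : ef_Theta !=set0;
  ef_b_der : forall e, ef_Theta e -> derivable ef_b e 1;
  ef_b'_incr : forall e1 e2, ef_Theta e1 -> ef_Theta e2 -> e1 < e2 ->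
      ef_b^`() e1 < ef_b^`() e2 }.

Section ExpFam.
Variables (R : realType) (F : expfam R).

Definition ef_X : set R := (ef_b F)^`() @` ef_Theta F.

(* natural parameter of the member with mean x (unique, for x in X) *)
Definition ef_eta (x : R) : R :=
  xget 0 [set e | ef_Theta F e /\ (ef_b F)^`() e = x].

(* KL divergence d(x,y) = KL(P_x || P_y) between the members with means
   x and y: b(eta y) - b(eta x) - x (eta y - eta x). *)
Definition ef_kl (x y : R) : R :=
  ef_b F (ef_eta y) - ef_b F (ef_eta x) - x * (ef_eta y - ef_eta x).
End ExpFam.

(* Finite rooted game trees.  Internal nodes carry a label:             *)
(* true = MAX, false = MIN.  A node is identified by its path from the  *)
(* root (the sequence of child indices).                               *)
Inductive tree := Leaf | Node of bool & seq tree.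

Fixpoint wf_tree (t : tree) : bool :=
  match t with
  | Leaf => true
  | Node _ cs => (size cs != 0%N) && all wf_tree cs
  end.

Fixpoint subtree (t : tree) (p : seq nat) : option tree :=
  match p with
  | [::] => Some t
  | i :: p' =>
    match t with
    | Leaf => None
    | Node _ cs => if (i < size cs)%N then subtree (nth Leaf cs i) p' else None
    end
  end.

Definition is_leaf (t : tree) (p : seq nat) : bool :=
  if subtree t p is Some Leaf then true else false.

Definition label (t : tree) (p : seq nat) : option bool :=
  if subtree t p is Some (Node b _) then Some b else None.

Fixpoint tfold (A : Type) (fl : seq nat -> A)
    (fn : seq nat -> bool -> seq A -> A) (t : tree) (p : seq nat) : A :=
  match t with
  | Leaf => fl p
  | Node b cs =>
    fn p b ((fix go (cs : seq tree) (i : nat) : seq A :=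
              match cs with
              | [::] => [::]
              | c :: cs' => tfold fl fn c (rcons p i) :: go cs' i.+1
              end) cs 0%N)
  end.

Definition leaves (t : tree) (p : seq nat) : seq (seq nat) :=
  tfold (fun q => [:: q]) (fun _ _ ls => flatten ls) t p.

Section Game.
Variable R : realType.

Definition seqmax (s : seq R) : R := foldr Num.max (head 0 s) s.
Definition seqmin (s : seq R) : R := foldr Num.min (head 0 s) s.

Definition value (mu : seq nat -> R) (t : tree) (p : seq nat) : R :=
  tfold mu (fun _ b vs => if b then seqmax vs else seqmin vs) t p.

Variables (d : R -> R -> R) (theta : R) (mu : seq nat -> R) (T : tree).

(* a* = 'win' iff V_{s0}(mu) >= theta; the label P is MAX (true) iff win *)
Definition win : bool := theta <= value mu T [::].

(* the pair (d_s, w^s) computed recursively, with a fixed choice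
   cstar (indexing the chosen child of a P-node at path p) and fixed
   arbitrary vectors wdef p (used when d_s = 0) *)
Definition dw (cstar : seq nat -> nat) (wdef : seq nat -> seq nat -> R)
    (t : tree) (p : seq nat) : R * (seq nat -> R) :=
  tfold
    (fun q => (if (win && (theta <= mu q)) || (~~ win && (mu q < theta))
               then d (mu q) theta else 0, fun _ => 1))
    (fun q b cs =>
       let ds := map fst cs in
       let ws := map snd cs in
       let i l := nth 0%N l (size q) in
       if b == win then
         let ds0 := seqmax ds in
         if 0 < ds0 then
           (ds0, fun l => if i l == cstar q then nth (fun _ => 0) ws (i l) l
                          else 0)
         else (ds0, wdef q)
       else
         if all (fun x => 0 < x) ds then
           let h := \sum_(x <- ds) x^-1 in
           (h^-1, fun l => (nth (fun _ => 0) ws (i l) l / nth 0 ds (i l)) / h)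
         else (0, wdef q))
    t p.

Definition dnode cstar wdef (q : seq nat) : R :=
  if subtree T q is Some s then (dw cstar wdef s q).1 else 0.
Definition wnode cstar wdef (q : seq nat) : seq nat -> R :=
  if subtree T q is Some s then (dw cstar wdef s q).2 else (fun _ => 0).

End Game.

(* Main.v *)
Require Import Defs.
From HB Require Import structures.
From mathcomp Require Import all_boot all_order all_algebra.
From mathcomp Require Import all_classical all_reals all_analysis.
From mathcomp Require Import ring lra.
Import Order.TTheory GRing.Theory Num.Theory.
Local Open Scope ring_scope.
Local Open Scope classical_set_scope.
Local Open Scope classical_set_scope.

Lemma ef_eta_spec (R : realType) (F : expfam R) x : ef_X F x ->
  ef_Theta F (ef_eta F x) /\ (ef_b F)^`() (ef_eta F x) = x.
Proof. case=> e He <-; have := @xgetPex R 0 [set e0 | ef_Theta F e0 /\ (ef_b F)^`() e0 = (ef_b F)^`() e]; apply; by exists e. Qed.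

Lemma mvt_b (R : realType) (F : expfam R) a c : ef_Theta F a -> ef_Theta F c -> a < c ->
  exists2 z, a < z < c & ef_b F c - ef_b F a = ((ef_b F)^`())%classic z * (c - a).
Proof.
move=> Ha Hc ac.
have sub : forall z, a <= z <= c -> ef_Theta F z.
  by move=> z; apply: (ef_Theta_itv Ha Hc).
have [|||z zin ->] := @MVT R (ef_b F) ((ef_b F)^`()) a c.
- by [].
- move=> z; rewrite in_itv /= => /andP[az zc].
  rewrite derive1E; apply: derivableP; apply: ef_b_der; apply: sub.
  by rewrite !ltW.
- apply: derivable_within_continuous => z; rewrite in_itv /= => zin.
  exact: ef_b_der (sub z zin).
- by exists z => //; move: zin; rewrite in_itv.
Qed.

Arguments mvt_b {R F a c}.
Lemma kl_pos (R : realType) (F : expfam R) x y : ef_X F x -> ef_X F y -> x != y ->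
  0 < ef_kl F x y.
Proof.
move=> /ef_eta_spec [Hx bx] /ef_eta_spec [Hy byy] xy.
rewrite /ef_kl.
set ex := ef_eta F x in Hx bx *; set ey := ef_eta F y in Hy byy *.
have : ex != ey by apply: contraNneq xy => e; rewrite -bx -byy e.
rewrite neq_lt => /orP[lt|lt].
- have [z /andP[z1 z2] ->] := mvt_b Hx Hy lt.
  have : x < (ef_b F)^`() z by rewrite -bx; apply: ef_b'_incr => //;
    apply: (ef_Theta_itv Hx Hy); rewrite !ltW.
  move=> h; rewrite -mulrBl mulr_gt0 // ?subr_gt0 //.
- have [z /andP[z1 z2] e] := mvt_b Hy Hx lt.
  have : (ef_b F)^`() z < x by rewrite -bx; apply: ef_b'_incr => //;
    apply: (ef_Theta_itv Hy Hx); rewrite !ltW.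
  move=> h.
  have -> : ef_b F ey - ef_b F ex - x * (ey - ex) = (x - ((ef_b F)^`())%classic z) * (ex - ey).
    by rewrite mulrBl -e; ring.
  by rewrite mulr_gt0 // subr_gt0.
Qed.

Local Close Scope classical_set_scope.
Section Go.
Variables (A : Type) (fl : seq nat -> A) (fn : seq nat -> bool -> seq A -> A) (p : seq nat).
Fixpoint go (cs : seq tree) (i : nat) : seq A :=
  match cs with
  | [::] => [::]
  | c :: cs' => tfold fl fn c (rcons p i) :: go cs' i.+1
  end.
Lemma tfold_node b cs : tfold fl fn (Node b cs) p = fn p b (go cs 0).
Proof. by []. Qed.
Lemma size_go cs k : size (go cs k) = size cs.
Proof. by elim: cs k => [|c cs IH] k //=; rewrite IH. Qed.
Lemma nth_go x0 cs k j : (j < size cs)%N ->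
  nth x0 (go cs k) j = tfold fl fn (nth Leaf cs j) (rcons p (k + j)%N).
Proof.
elim: cs k j => [|c cs IH] k [|j] //=; try by rewrite addn0.
by move=> H; rewrite IH // addSnnS.
Qed.
End Go.
Arguments go {A}.

Lemma subtree_cat T p r : subtree T (p ++ r) =
  if subtree T p is Some t then subtree t r else None.
Proof.
elim: p T => [|i p IH] [|b cs] //=.
by case: ifP.
Qed.

Lemma subtree_rcons T p t j : subtree T p = Some t ->
  subtree T (rcons p j) =
  if t is Node _ cs then (if (j < size cs)%N then Some (nth Leaf cs j) else None) else None.
Proof.
by move=> H; rewrite -cats1 subtree_cat H; case: t {H} => //= b cs; case: ifP.
Qed.

Fixpoint tree_ind' (P : tree -> Prop) (HL : P Leaf)
  (HN : forall b cs, (forall k, (k < size cs)%N -> P (nth Leaf cs k)) -> P (Node b cs))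
  (t : tree) : P t :=
  match t with
  | Leaf => HL
  | Node b cs => HN b cs ((fix g (cs : seq tree) : forall k, (k < size cs)%N -> P (nth Leaf cs k) :=
       match cs as cs0 return forall k, (k < size cs0)%N -> P (nth Leaf cs0 k) with
       | [::] => fun k H => False_ind _ (notF H)
       | c :: cs' => fun k => match k as k0 return (k0 < size (c :: cs'))%N -> P (nth Leaf (c :: cs') k0) with
                              | 0 => fun _ => tree_ind' P HL HN c
                              | k'.+1 => fun H => g cs' k' H
                              end
       end) cs)
  end.

Section SeqM.
Variable R : realType.
Implicit Types s : seq R.

Lemma foldmax_ge s h x : x \in s -> x <= foldr Num.max h s.
Proof.
elim: s => //= y s IH; rewrite in_cons => /orP[/eqP->|/IH H].
  by rewrite le_max lexx.
by rewrite le_max H orbT.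
Qed.
Lemma foldmax_gt s h a : a < foldr Num.max h s -> a < h \/ exists2 x, x \in s & a < x.
Proof.
elim: s => [|y s IH] /=; first by left.
rewrite lt_max => /orP[H|/IH [H|[x xs H]]]; [right; exists y; rewrite ?mem_head // | by left | ].
by right; exists x => //; rewrite in_cons xs orbT.
Qed.
Lemma foldmin_le s h x : x \in s -> foldr Num.min h s <= x.
Proof.
elim: s => //= y s IH; rewrite in_cons => /orP[/eqP->|/IH H].
  by rewrite ge_min lexx.
by rewrite ge_min H orbT.
Qed.
Lemma foldmin_lt s h a : foldr Num.min h s < a -> h < a \/ exists2 x, x \in s & x < a.
Proof.
elim: s => [|y s IH] /=; first by left.
rewrite gt_min => /orP[H|/IH [H|[x xs H]]]; [right; exists y; rewrite ?mem_head // | by left | ].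
by right; exists x => //; rewrite in_cons xs orbT.
Qed.

Lemma seqmax_ge s k : (k < size s)%N -> nth 0 s k <= seqmax s.
Proof. by move=> ks; apply: foldmax_ge; rewrite mem_nth. Qed.
Lemma seqmin_le s k : (k < size s)%N -> seqmin s <= nth 0 s k.
Proof. by move=> ks; apply: foldmin_le; rewrite mem_nth. Qed.
Lemma seqmax_gt s a : (0 < size s)%N -> a < seqmax s ->
  exists2 k, (k < size s)%N & a < nth 0 s k.
Proof.
case: s => [|y s] //= _ /foldmax_gt [H|[x xs H]]; first by exists 0%N.
by have /(nthP 0) [k ks kx] := xs; exists k => //; rewrite kx.
Qed.
Lemma seqmin_lt s a : (0 < size s)%N -> seqmin s < a ->
  exists2 k, (k < size s)%N & nth 0 s k < a.
Proof.
case: s => [|y s] //= _ /foldmin_lt [H|[x xs H]]; first by exists 0%N.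
by have /(nthP 0) [k ks kx] := xs; exists k => //; rewrite kx.
Qed.
Lemma foldmax_le s h M : h <= M -> (forall x, x \in s -> x <= M) -> foldr Num.max h s <= M.
Proof.
move=> hM; elim: s => [|y s IH] //= Hs.
rewrite ge_max Hs ?mem_head // IH // => x xs; apply: Hs; by rewrite in_cons xs orbT.
Qed.
Lemma seqmax_le s M : (0 < size s)%N -> (forall k, (k < size s)%N -> nth 0 s k <= M) ->
  seqmax s <= M.
Proof.
case: s => [|y s] //= _ H; apply: foldmax_le; first exact: (H 0%N).
by move=> x /(nthP 0) [k ks <-]; apply: H.
Qed.
End SeqM.
Arguments seqmax_gt {R s a}.
Arguments seqmin_lt {R s a}.

Section Main.
Variables (R : realType) (d : R -> R -> R) (theta : R) (mu : seq nat -> R) (T : tree)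
  (cstar : seq nat -> nat) (wdef : seq nat -> seq nat -> R).

Let W := win theta mu T.

Definition FL := (fun q => (if (W && (theta <= mu q)) || (~~ W && (mu q < theta))
               then d (mu q) theta else 0, fun _ : seq nat => (1:R))).
Definition FN := (fun q b (cs : seq (R * (seq nat -> R))) =>
       let ds := map fst cs in
       let ws := map snd cs in
       let i l := nth 0%N l (size q) in
       if b == W then
         let ds0 := seqmax ds in
         if 0 < ds0 then
           (ds0, fun l => if i l == cstar q then nth (fun _ => 0) ws (i l) l
                          else 0)
         else (ds0, wdef q)
       else
         if all (fun x => 0 < x) ds then
           let h := \sum_(x <- ds) x^-1 in
           (h^-1, fun l => (nth (fun _ => 0) ws (i l) l / nth 0 ds (i l)) / h)
         else (0, wdef q)).

Lemma FNE q b (cs : seq (R * (seq nat -> R))) : FN q b cs =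

       let ds := map fst cs in
       let ws := map snd cs in
       let i l := nth 0%N l (size q) in
       if b == W then
         let ds0 := seqmax ds in
         if 0 < ds0 then
           (ds0, fun l => if i l == cstar q then nth (fun _ => 0) ws (i l) l
                          else 0)
         else (ds0, wdef q)
       else
         if all (fun x => 0 < x) ds then
           let h := \sum_(x <- ds) x^-1 in
           (h^-1, fun l => (nth (fun _ => 0) ws (i l) l / nth 0 ds (i l)) / h)
         else (0, wdef q).
Proof. by []. Qed.

Lemma dwE t p : dw d theta mu T cstar wdef t p = tfold FL FN t p.
Proof. by []. Qed.


Definition ch cs p k := tfold FL FN (nth Leaf cs k) (rcons p k).

Lemma nthG cs p k : (k < size cs)%N ->
  nth (0, fun _ => 0) (go FL FN p cs 0) k = ch cs p k.
Proof. by move=> ks; rewrite nth_go // add0n. Qed.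
Lemma nthds cs p k : (k < size cs)%N ->
  nth 0 (map fst (go FL FN p cs 0)) k = (ch cs p k).1.
Proof. by move=> ks; rewrite (nth_map (0, fun _ => 0)) ?size_go // nthG. Qed.
Lemma nthws cs p k : (k < size cs)%N ->
  nth (fun _ => 0) (map snd (go FL FN p cs 0)) k = (ch cs p k).2.
Proof. by move=> ks; rewrite (nth_map (0, fun _ => 0)) ?size_go // nthG. Qed.

Lemma step b cs p j l : (j < size cs)%N -> nth 0%N l (size p) = j ->
  0 < (tfold FL FN (Node b cs) p).1 ->
  (b = W -> (cstar p < size cs)%N /\
     forall k, (k < size cs)%N -> (ch cs p k).1 <= (ch cs p (cstar p)).1) ->
  (0 < (tfold FL FN (Node b cs) p).2 l <->
   ((b = W -> cstar p = j) /\ 0 < (ch cs p j).1 /\ 0 < (ch cs p j).2 l)).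
Proof.
move=> js lj HD HC.
move: HD; rewrite tfold_node FNE /=.
case: eqP => [bW|bW].
- case: ifP => [Hpos _|]; last by move=> ->.
  rewrite /= lj.
  have [cs_s Hmax] := HC bW.
  case: (eqVneq j (cstar p)) => [ej|ne].
  + rewrite -ej nthws //; split; last by case=> _ [].
    move=> H; split => //; split => //.
    apply: (lt_le_trans Hpos); apply: seqmax_le; first by rewrite size_map size_go (leq_ltn_trans _ js).
    by move=> k; rewrite size_map size_go => ks; rewrite nthds // ej; apply: Hmax.
  + rewrite ltxx; split => // [[H _]].
    by move: ne; rewrite (H bW) eqxx.
- case: ifP => [Hall|]; last by rewrite ltxx.
  rewrite invr_gt0 => hpos; rewrite /= lj.
  have dj : 0 < (ch cs p j).1.
    by rewrite -nthds //; apply: (all_nthP 0 Hall); rewrite size_map size_go.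
  rewrite nthws // nthds // !pmulr_lgt0 ?invr_gt0 //.
  by split => [H|[_ [_ H]]] //; split => // /bW.
Qed.


Let dn := dnode d theta mu T cstar wdef.

Lemma dnodeE q s : subtree T q = Some s -> dn q = (tfold FL FN s q).1.
Proof. by rewrite /dn /dnode => ->. Qed.
Arguments dnodeE {q s}.
Arguments step {b cs p j l}.
Arguments subtree_rcons {T p t} j.

Hypothesis HC : forall q b cs, subtree T q = Some (Node b cs) ->
     b = W ->
     (cstar q < size cs)%N /\
     (forall j, (j < size cs)%N -> dn (rcons q j) <= dn (rcons q (cstar q))).

Lemma path_lemma r : forall p t, subtree T p = Some t -> subtree t r = Some Leaf ->
  0 < (tfold FL FN t p).1 ->
  (0 < (tfold FL FN t p).2 (p ++ r) <->
   (forall i, (i <= size r)%N -> 0 < dn (p ++ take i r)) /\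
   (forall i, (i < size r)%N -> label T (p ++ take i r) = Some W ->
      cstar (p ++ take i r) = nth 0%N r i)).
Proof.
elim: r => [|j r IH] p t Hp Ht HD.
- move: Ht => [->]; split => // _; split => // [[|i]] // _.
  by rewrite cats0 (dnodeE Hp).
- case: t Hp Ht HD => [|b cs] //= Hp.
  case: ifP => // js Hc HD.
  set c := nth Leaf cs j in Hc.
  have Hpj : subtree T (rcons p j) = Some c by rewrite (subtree_rcons _ Hp) js.
  have lab : label T p = Some b by rewrite /label Hp.
  have HC' : b = W -> (cstar p < size cs)%N /\
     forall k, (k < size cs)%N -> (ch cs p k).1 <= (ch cs p (cstar p)).1.
    move=> bW; have [cs_s H] := HC _ _ _ Hp bW; split => // k ks.
    have := H k ks.
    rewrite (dnodeE (s := nth Leaf cs k)) ?(subtree_rcons _ Hp) ?ks //.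
    by rewrite (dnodeE (s := nth Leaf cs (cstar p))) ?(subtree_rcons _ Hp) ?cs_s.
  have lj : nth 0%N (p ++ j :: r) (size p) = j by rewrite nth_cat ltnn subnn.
  rewrite (step js lj HD HC') -cat_rcons.
  have Hch : ch cs p j = tfold FL FN c (rcons p j) by [].
  rewrite Hch.
  split.
  + move=> [Hb [Dc Wc]].
    have [H1 H2] := (IH (rcons p j) c Hpj Hc Dc).1 Wc.
    split => [[|i]|[|i]] /=.
    * by rewrite cats0 (dnodeE Hp).
    * by rewrite -cat_rcons; apply: H1.
    * by rewrite cats0 lab => _ [/Hb].
    * by rewrite -cat_rcons; apply: H2.
  + move=> [H1 H2].
    have Dc : 0 < (tfold FL FN c (rcons p j)).1.
      have := H1 1%N isT; rewrite /= take0.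
      by rewrite cats1 (dnodeE Hpj).
    split; first by move=> bW; have := H2 0%N isT; rewrite cats0 lab bW => /(_ erefl).
    split => //; apply/(IH (rcons p j) c Hpj Hc Dc); split.
    * by move=> i ir; have := H1 i.+1 ir; rewrite /= -cat_rcons.
    * by move=> i ir; have := H2 i.+1 ir; rewrite /= -cat_rcons.
Qed.


Hypothesis Hdpos : forall q, is_leaf T q -> mu q != theta -> 0 < d (mu q) theta.

Definition good v := if W then theta < v else v < theta.

Lemma sum_inv_gt0 (s : seq R) : (0 < size s)%N -> all (fun x => 0 < x) s ->
  0 < \sum_(x <- s) x^-1.
Proof.
case: s => [|x s] //= _ /andP[x0 Hs]; rewrite big_cons.
apply: (lt_le_trans (_ : 0 < x^-1)); first by rewrite invr_gt0.
rewrite lerDl big_seq_cond; apply: sumr_ge0 => y /andP[ys _].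
by rewrite invr_ge0 ltW // (allP Hs).
Qed.

Lemma root_pos t : forall p, subtree T p = Some t -> wf_tree t ->
  good (value mu t p) -> 0 < (tfold FL FN t p).1.
Proof.
elim/tree_ind': t => [|b cs IH] p Hp.
- move=> _; rewrite /good /value /= /FL.
  have lf : is_leaf T p by rewrite /is_leaf Hp.
  case: W => /= H.
  + by rewrite (ltW H) /=; apply: Hdpos => //; rewrite gt_eqF.
  + by rewrite H /=; apply: Hdpos => //; rewrite lt_eqF.
- move=> /= /andP[sz /(all_nthP Leaf) wfc] Hg.
  have sz' : (0 < size cs)%N by rewrite lt0n.
  have Hpk k : (k < size cs)%N -> subtree T (rcons p k) = Some (nth Leaf cs k).
    by move=> ks; rewrite (subtree_rcons k Hp) ks.
  have IHk k : (k < size cs)%N -> good (value mu (nth Leaf cs k) (rcons p k)) ->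
      0 < (ch cs p k).1.
    move=> ks; apply: IH => //; first exact: Hpk.
    exact: wfc.
  change (0 < (FN p b (go FL FN p cs 0)).1); move: Hg; rewrite /value tfold_node -/(value mu).
  set vs := go _ _ p cs 0.
  have Hv k : (k < size cs)%N -> nth 0 vs k = value mu (nth Leaf cs k) (rcons p k).
    by move=> ks; rewrite nth_go // add0n.
  have szv : size vs = size cs by rewrite size_go.
  have szd : size (map fst (go FL FN p cs 0)) = size cs by rewrite size_map size_go.
  rewrite FNE /=.
  have Pcase : (exists2 k, (k < size cs)%N & good (nth 0 vs k)) ->
      0 < seqmax [seq i.1 | i <- go FL FN p cs 0].
    case=> k ks gk; apply: (lt_le_trans (IHk k ks _)); first by rewrite -Hv.
    by rewrite -nthds //; apply: seqmax_ge; rewrite szd.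
  have Qcase : (forall k, (k < size cs)%N -> good (nth 0 vs k)) ->
      all (fun x => 0 < x) [seq i.1 | i <- go FL FN p cs 0].
    move=> Hall.
    apply/(all_nthP 0) => k; rewrite szd => ks; rewrite nthds //.
    by apply: IHk => //; rewrite -Hv //; apply: Hall.
  move: Pcase Qcase; rewrite /good.
  have [Wc|Wc] : W = true \/ W = false by case: W; auto.
  all: rewrite Wc; destruct b => /= Pcase Qcase Hg.
  + have szv0 : (0 < size vs)%N by rewrite szv.
    have [k ks gk] := seqmax_gt szv0 Hg.
    by case: ifP => _ /=; apply: Pcase; exists k; rewrite -?szv.
  + have HA : all (fun x => 0 < x) [seq i.1 | i <- go FL FN p cs 0].
      by apply: Qcase => k ks; apply: (lt_le_trans Hg); apply: seqmin_le; rewrite szv.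
    by rewrite HA /= invr_gt0 sum_inv_gt0 // szd.
  + have HA : all (fun x => 0 < x) [seq i.1 | i <- go FL FN p cs 0].
      by apply: Qcase => k ks; apply: (le_lt_trans _ Hg); apply: seqmax_ge; rewrite szv.
    by rewrite HA /= invr_gt0 sum_inv_gt0 // szd.
  + have szv0 : (0 < size vs)%N by rewrite szv.
    have [k ks gk] := seqmin_lt szv0 Hg.
    by case: ifP => _ /=; apply: Pcase; exists k; rewrite -?szv.
Qed.

End Main.

Theorem proposition9 (R : realType) (F : expfam R) (theta : R)
  (T : tree) (mu : seq nat -> R)
  (cstar : seq nat -> nat) (wdef : seq nat -> seq nat -> R)
  (l : seq nat) :
  wf_tree T ->
  ef_X F theta ->
  (forall q, is_leaf T q -> ef_X F (mu q)) ->
  (* c*(s) is a fixed element of argmax_{c in C(s)} d_c, for P-nodes s *)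
  (forall q b cs, subtree T q = Some (Node b cs) ->
     b = win theta mu T ->
     (cstar q < size cs)%N /\
     (forall j, (j < size cs)%N ->
        dnode (ef_kl F) theta mu T cstar wdef (rcons q j)
        <= dnode (ef_kl F) theta mu T cstar wdef (rcons q (cstar q)))) ->
  (* wdef q is a fixed probability vector on D(s), s the node at q *)
  (forall q b cs, subtree T q = Some (Node b cs) ->
     (forall m, m \in leaves (Node b cs) q -> 0 <= wdef q m) /\
     \sum_(m <- leaves (Node b cs) q) wdef q m = 1) ->
  value mu T [::] != theta ->
  is_leaf T l ->
  (0 < wnode (ef_kl F) theta mu T cstar wdef [::] l <->
   (forall i, (i <= size l)%N ->
      0 < dnode (ef_kl F) theta mu T cstar wdef (take i l)) /\
   (forall i, (i < size l)%N ->
      label T (take i l) = Some (win theta mu T) ->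
      cstar (take i l) = nth 0%N l i)).
Proof.
move=> wfT thX muX HCst _ Vne lfT.
have Hdpos : forall q, is_leaf T q -> mu q != theta -> 0 < ef_kl F (mu q) theta.
  by move=> q lq ne; apply: (@kl_pos _ F _ _ (muX q lq) thX ne).
have Droot : 0 < (tfold (@FL R (ef_kl F) theta mu T) (@FN R theta mu T cstar wdef) T [::]).1.
  apply: (@root_pos _ _ _ _ _ cstar wdef Hdpos T [::]) => //.
  rewrite /good /win; case: ifP => H.
  - by rewrite lt_neqAle eq_sym Vne.
  - by rewrite ltNge H.
have Hl : subtree T l = Some Leaf.
  by move: lfT; rewrite /is_leaf; case: (subtree T l) => [[|]|].
have := @path_lemma _ _ _ _ _ _ _ HCst l [::] T erefl Hl Droot.
by rewrite /wnode /= dwE.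
Qed.
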